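(* Let $G$ be a finitely generated group and $\tau_{\Delta,e}$ an elementary automorphism of $G$ (arising from a splitting $\Delta$ with element $e$). Let $\mathcal{R}(G)_i$ be an irreducible component of $\mathcal{R}(G)$ containing some $\rho$ with $\operatorname{trace}(\rho(e))\neq-2$. Then $\tau_{\Delta,e}(\mathcal{R}(G)_i)=\mathcal{R}(G)_i$, where automorphisms act on $\mathcal{R}(G)$ by precomposition. Moreover, the modular group $\mathrm{Mod}(G)$ acts trivially on the set of irreducible components of $\mathcal{R}_2(G)$.
   Context: $\mathcal{R}(G)=\mathrm{Hom}(G,SL(2,\mathbb{C}))$, an affine algebraic variety. Elementary automorphisms: (i) if $G=G_1*_EG_2$ with $E$ finitely generated abelian (possibly trivial; $G_1$ possibly trivial) and $e\in Z_{G_2}(E)$, $\tau_{\Delta,e}$ is the identity on $G_1$ and conjugation by $e$ on $G_2$; (ii) if $G=G'*_E$ is an HNN extension over finitely generated abelian $E$ (possibly trivial) with stable letter $t$, $tEt^{-1}=E_1$, and $e\in Z_{G'}(E)$, $\tau_{\Delta,e}$ is the identity on $G'$ and maps $t\mapsto te$. $\mathrm{Mod}(G)$ is the subgroup of $\mathrm{Aut}(G)$ generated by elementary automorphisms. $\mathcal{R}_2(G)$ is the union of those irreducible components $V$ of $\mathcal{R}(G)$ such that for every $g\in G$ there is $\rho\in V$ with $\operatorname{trace}(\rho(g))\neq-2$. *)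

(* Defs.v *)
From HB Require Import structures.
From mathcomp Require Import all_boot all_algebra.
From mathcomp Require Import monoid.
From mathcomp.real_closed Require Import complex.
From mathcomp Require Import reals.

Set Implicit Arguments.
Unset Strict Implicit.
Unset Printing Implicit Defensive.

Local Open Scope group_scope.

Section GroupNotions.
Variable G : groupType.

Definition subgroup (A : G -> Prop) : Prop :=
  A 1 /\ (forall x y, A x -> A y -> A (x * y^-1)).

Definition generated_by (A : G -> Prop) (s : seq G) : Prop :=
  (forall x, x \in s -> A x) /\
  (forall B : G -> Prop, subgroup B -> (forall x, x \in s -> B x) ->
     forall x, A x -> B x).

Definition fg_subgroup (A : G -> Prop) : Prop :=
  subgroup A /\ exists s : seq G, generated_by A s.

Definition finitely_generated : Prop :=
  exists s : seq G, generated_by (fun _ => True) s.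

Definition abelian_subgroup (A : G -> Prop) : Prop :=
  forall x y, A x -> A y -> x * y = y * x.

Definition in_centralizer (A E : G -> Prop) (e : G) : Prop :=
  A e /\ forall x, E x -> e * x = x * e.

End GroupNotions.

Definition ghom (G H : groupType) (f : G -> H) : Prop :=
  forall x y, f (x * y) = f x * f y.

Definition ghom_on (G H : groupType) (A : G -> Prop) (f : G -> H) : Prop :=
  forall x y, A x -> A y -> f (x * y) = f x * f y.

(* G = G1 *_E G2 (internal amalgamated free product): G1, G2 subgroups of G,
   E a finitely generated abelian subgroup of both, and G satisfies the
   universal property of the pushout of G1 <- E -> G2 in groups. *)
Definition amalgam_splitting (G : groupType) (G1 G2 E : G -> Prop) : Prop :=
  subgroup G1 /\ subgroup G2 /\ fg_subgroup E /\ abelian_subgroup E /\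
  (forall x, E x -> G1 x) /\ (forall x, E x -> G2 x) /\
  forall (H : groupType) (f1 f2 : G -> H),
    ghom_on G1 f1 -> ghom_on G2 f2 -> (forall x, E x -> f1 x = f2 x) ->
    exists f : G -> H,
      [/\ ghom f, (forall x, G1 x -> f x = f1 x), (forall x, G2 x -> f x = f2 x)
        & forall f' : G -> H, ghom f' -> (forall x, G1 x -> f' x = f1 x) ->
            (forall x, G2 x -> f' x = f2 x) -> forall x, f' x = f x].

(* G = G' *_E (internal HNN extension) with stable letter t, t E t^-1 = E1:
   G', E, E1 subgroups, E, E1 <= G', E finitely generated abelian, and G
   satisfies the universal property of the HNN extension. *)
Definition hnn_splitting (G : groupType) (G' E E1 : G -> Prop) (t : G) : Prop :=
  subgroup G' /\ fg_subgroup E /\ abelian_subgroup E /\ subgroup E1 /\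
  (forall x, E x -> G' x) /\ (forall x, E1 x -> G' x) /\
  (forall x, E x -> E1 (t * x * t^-1)) /\
  (forall y, E1 y -> exists2 x, E x & y = t * x * t^-1) /\
  forall (H : groupType) (f : G -> H) (h : H),
    ghom_on G' f -> (forall x, E x -> h * f x * h^-1 = f (t * x * t^-1)) ->
    exists F : G -> H,
      [/\ ghom F, (forall x, G' x -> F x = f x), F t = h
        & forall F' : G -> H, ghom F' -> (forall x, G' x -> F' x = f x) ->
            F' t = h -> forall x, F' x = F x].

Definition elementary_aut (G : groupType) (e : G) (tau : G -> G) : Prop :=
  (exists G1 G2 E : G -> Prop,
     [/\ amalgam_splitting G1 G2 E, in_centralizer G2 E e, ghom tau,
         (forall x, G1 x -> tau x = x)
       & (forall x, G2 x -> tau x = e * x * e^-1)])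
  \/
  (exists (G' E E1 : G -> Prop) (t : G),
     [/\ hnn_splitting G' E E1 t, in_centralizer G' E e, ghom tau,
         (forall x, G' x -> tau x = x)
       & tau t = t * e]).

(* Mod(G): the subgroup of Aut(G) generated by elementary automorphisms
   (automorphisms compared extensionally). *)
Inductive in_Mod (G : groupType) : (G -> G) -> Prop :=
  | Mod_id : in_Mod id
  | Mod_elem e tau : elementary_aut e tau -> in_Mod tau
  | Mod_comp f g : in_Mod f -> in_Mod g -> in_Mod (f \o g)
  | Mod_inv f g : in_Mod f -> cancel f g -> cancel g f -> in_Mod g
  | Mod_ext f g : in_Mod f -> (forall x, f x = g x) -> in_Mod g.

Local Open Scope ring_scope.

Section RepVariety.
Variables (G : groupType) (C : comNzRingType).

Definition is_SL2_rep (rho : G -> 'M[C]_2) : Prop :=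
  (forall x y : G, rho (x * y)%g = rho x *m rho y) /\
  (forall x : G, \det (rho x) = 1).

Definition Rep := {rho : G -> 'M[C]_2 | is_SL2_rep rho}.

(* regular functions on R(G): the C-algebra generated by the matrix
   coefficients rho |-> rho(g)_{ij} *)
Inductive regfun : Type :=
  | RConst of C
  | RCoord of G & 'I_2 & 'I_2
  | RAdd of regfun & regfun
  | RMul of regfun & regfun.

Fixpoint reg_eval (f : regfun) (rho : Rep) : C :=
  match f with
  | RConst c => c
  | RCoord g i j => proj1_sig rho g i j
  | RAdd f1 f2 => reg_eval f1 rho + reg_eval f2 rho
  | RMul f1 f2 => reg_eval f1 rho * reg_eval f2 rho
  end.

Definition zclosed (Z : Rep -> Prop) : Prop :=
  exists S : regfun -> Prop,
    forall rho, Z rho <-> (forall f, S f -> reg_eval f rho = 0).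

Definition irreducible (V : Rep -> Prop) : Prop :=
  (exists rho, V rho) /\
  forall A B : Rep -> Prop, zclosed A -> zclosed B ->
    (forall rho, V rho -> A rho \/ B rho) ->
    (forall rho, V rho -> A rho) \/ (forall rho, V rho -> B rho).

Definition irr_component (V : Rep -> Prop) : Prop :=
  irreducible V /\
  forall W : Rep -> Prop, irreducible W -> (forall rho, V rho -> W rho) ->
    forall rho, W rho -> V rho.

(* phi(V) = V, where phi acts by precomposition: phi(V) = {rho o phi | rho in V} *)
Definition precomp_stable (phi : G -> G) (V : Rep -> Prop) : Prop :=
  forall sigma : Rep,
    V sigma <-> exists2 rho : Rep, V rho &
                  forall g, proj1_sig sigma g = proj1_sig rho (phi g).

End RepVariety.

(* Main.v *)
Require Import Defs.
From HB Require Import structures.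
From mathcomp Require Import all_boot all_algebra.
From mathcomp Require Import monoid.
From mathcomp.real_closed Require Import complex.
From mathcomp Require Import reals.
From mathcomp Require Import boolp.
From mathcomp Require Import ring.
Set Implicit Arguments.
Unset Strict Implicit.
Unset Printing Implicit Defensive.
Import GRing.Theory Num.Theory.
Local Open Scope ring_scope.

Section Mx2.
Variable C : comNzRingType.
Implicit Types M N : 'M[C]_2.

Lemma sum2 (F : 'I_2 -> C) : \sum_i F i = F 0 + F 1.
Proof.
rewrite big_ord_recl big_ord_recl big_ord0 addr0.
by congr (F _ + F _); apply: val_inj.
Qed.

Lemma det2 M : \det M = M 0 0 * M 1 1 - M 0 1 * M 1 0.
Proof.
rewrite (expand_det_row _ ord0) sum2 /cofactor !det_mx11 !mxE /=.
rewrite !expr0 !expr1.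
have -> : (lift 0 0 : 'I_2) = 1 by apply: val_inj.
have -> : (lift 1 0 : 'I_2) = 0 by apply: val_inj.
ring.
Qed.

Lemma tr2 M : \tr M = M 0 0 + M 1 1.
Proof. by rewrite /mxtrace sum2. Qed.

Lemma mul2E M N i j : (M *m N) i j = M i 0 * N 0 j + M i 1 * N 1 j.
Proof. by rewrite mxE sum2. Qed.

Lemma ord2P (P : 'I_2 -> Prop) : P 0 -> P 1 -> forall i, P i.
Proof.
move=> h0 h1 [[|[|k]] hk].
- by have -> : Ordinal hk = 0 by apply: val_inj.
- by have -> : Ordinal hk = 1 by apply: val_inj.
- by [].
Qed.

Definition adj2 M : 'M[C]_2 := (\tr M)%:M - M.

Lemma mx2P M N : M 0 0 = N 0 0 -> M 0 1 = N 0 1 -> M 1 0 = N 1 0 -> M 1 1 = N 1 1 -> M = N.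
Proof.
move=> h1 h2 h3 h4; apply/matrixP; apply: ord2P; apply: ord2P => //.
Qed.

Lemma adj2E M : [/\ adj2 M 0 0 = M 1 1, adj2 M 1 1 = M 0 0,
  adj2 M 0 1 = - M 0 1 & adj2 M 1 0 = - M 1 0].
Proof. rewrite !mxE /= tr2; split; ring. Qed.

Lemma mx_adj2 M : M *m adj2 M = (\det M)%:M.
Proof.
have [a1 a2 a3 a4] := adj2E M.
apply: mx2P; rewrite mul2E ?a1 ?a2 ?a3 ?a4 det2 !mxE /=; ring.
Qed.

Lemma adj2_mx M : adj2 M *m M = (\det M)%:M.
Proof.
have [a1 a2 a3 a4] := adj2E M.
apply: mx2P; rewrite mul2E ?a1 ?a2 ?a3 ?a4 det2 !mxE /=; ring.
Qed.

Lemma adj2Z (c : C) M : adj2 (c *: M) = c *: adj2 M.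
Proof.
by rewrite /adj2 mxtraceZ scalerBr scale_scalar_mx.
Qed.

Lemma det_adj2 M : \det (adj2 M) = \det M.
Proof. have [a1 a2 a3 a4] := adj2E M; rewrite !det2 a1 a2 a3 a4; ring. Qed.

Lemma adj2M M N : adj2 (M *m N) = adj2 N *m adj2 M.
Proof.
have [a1 a2 a3 a4] := adj2E M; have [b1 b2 b3 b4] := adj2E N.
have [c1 c2 c3 c4] := adj2E (M *m N).
apply: mx2P; rewrite ?c1 ?c2 ?c3 ?c4 !mul2E ?a1 ?a2 ?a3 ?a4 ?b1 ?b2 ?b3 ?b4; ring.
Qed.

End Mx2.

Definition SL2 (R : realType) := {M : 'M[R[i]]_2 | \det M == 1}.
HB.instance Definition _ (R : realType) := Choice.on (SL2 R).

Section SL2.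
Variable R : realType.
Local Notation S := (SL2 R).
Lemma sl2_one_proof : \det (1%:M : 'M[R[i]]_2) == 1. Proof. by rewrite det1. Qed.
Definition sl2_one : S := exist (fun M : 'M[R[i]]_2 => \det M == 1) _ sl2_one_proof.
Lemma sl2_mul_proof (a b : S) : \det (val a *m val b) == 1.
Proof. by rewrite det_mulmx (eqP (valP a)) (eqP (valP b)) mulr1. Qed.
Definition sl2_mul (a b : S) : S := exist (fun M : 'M[R[i]]_2 => \det M == 1) _ (sl2_mul_proof a b).
Lemma sl2_inv_proof (a : S) : \det (adj2 (val a)) == 1.
Proof. by rewrite det_adj2 (valP a). Qed.
Definition sl2_inv (a : S) : S := exist (fun M : 'M[R[i]]_2 => \det M == 1) _ (sl2_inv_proof a).
Lemma sl2_mulA : associative sl2_mul.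
Proof. by move=> a b c; apply: val_inj; rewrite /= mulmxA. Qed.
Lemma sl2_mul1 : left_id sl2_one sl2_mul.
Proof. by move=> a; apply: val_inj; rewrite /= mul1mx. Qed.
Lemma sl2_mulr1 : right_id sl2_one sl2_mul.
Proof. by move=> a; apply: val_inj; rewrite /= mulmx1. Qed.
Lemma sl2_mulV : left_inverse sl2_one sl2_inv sl2_mul.
Proof. by move=> a; apply: val_inj; rewrite /= adj2_mx (eqP (valP a)). Qed.
Lemma sl2_mulVr : right_inverse sl2_one sl2_inv sl2_mul.
Proof. by move=> a; apply: val_inj; rewrite /= mx_adj2 (eqP (valP a)). Qed.
HB.instance Definition _ := isGroup.Build S sl2_mulA sl2_mul1 sl2_mulr1 sl2_mulV sl2_mulVr.
End SL2.

Definition Bij (T : Type) :=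
  {p : (T -> T) * (T -> T) | cancel p.1 p.2 /\ cancel p.2 p.1}.
HB.instance Definition _ (T : Type) := gen_eqMixin (Bij T).
HB.instance Definition _ (T : Type) := gen_choiceMixin (Bij T).

Section BijGroup.
Variable T : Type.
Local Notation B := (Bij T).
Definition bfun (a : B) : T -> T := (proj1_sig a).1.

Lemma bij_ext (a b : B) : (forall x, bfun a x = bfun b x) -> a = b.
Proof.
case: a b => [[f f'] [hf hf']] [[g g'] [hg hg']] /= h; simpl in *.
have h' : forall y, f y = g y := h.
have ef : f = g by apply: funext.
have ef' : f' = g'.
  by apply: funext => x; rewrite -{1}(hg' x) /= -h' (hf (g' x)).
subst; f_equal; apply: Prop_irrelevance.
Qed.

Lemma bone_proof : cancel (@id T) id /\ cancel (@id T) id. Proof. by []. Qed.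
Definition bone : B := exist _ (id, id) bone_proof.
Lemma bmul_proof (a b : B) :
  let p := (fun x => bfun a (bfun b x), fun x => (proj1_sig b).2 ((proj1_sig a).2 x)) in
  cancel p.1 p.2 /\ cancel p.2 p.1.
Proof.
case: a b => [[f f'] [hf hf']] [[g g'] [hg hg']] /=; rewrite /bfun /=.
simpl in *; by split => x /=; rewrite ?hf ?hg ?hf' ?hg'.
Qed.
Definition bmul (a b : B) : B := exist _ _ (bmul_proof a b).
Lemma binv_proof (a : B) :
  let p := ((proj1_sig a).2, (proj1_sig a).1) in cancel p.1 p.2 /\ cancel p.2 p.1.
Proof. by case: a => [[f f'] [hf hf']] /=; simpl in *; split. Qed.
Definition binv (a : B) : B := exist _ _ (binv_proof a).
Lemma bmulA : associative bmul. Proof. by move=> a b c; apply: bij_ext. Qed.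
Lemma bmul1 : left_id bone bmul. Proof. by move=> a; apply: bij_ext. Qed.
Lemma bmulr1 : right_id bone bmul. Proof. by move=> a; apply: bij_ext. Qed.
Lemma bmulV : left_inverse bone binv bmul.
Proof. by case=> [[f f'] [hf hf']]; apply: bij_ext => x; exact: hf. Qed.
Lemma bmulVr : right_inverse bone binv bmul.
Proof. by case=> [[f f'] [hf hf']]; apply: bij_ext => x; exact: hf'. Qed.
HB.instance Definition _ := isGroup.Build B bmulA bmul1 bmulr1 bmulV bmulVr.
Lemma bfunV (a : B) x : bfun (a^-1)%g x = (proj1_sig a).2 x. Proof. by []. Qed.
Lemma bfunM (a b : B) x : bfun (a * b)%g x = bfun a (bfun b x). Proof. by []. Qed.
Definition mkbij (f g : T -> T) (h1 : cancel f g) (h2 : cancel g f) : B :=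
  exist _ (f, g) (conj h1 h2).
End BijGroup.

Section Gen.
Local Open Scope group_scope.
Variable G : groupType.
Local Notation T := (G * bool)%type.
Variable (B : G -> Prop).
Hypothesis B1 : B 1.
Hypothesis BM : forall x y, B x -> B y -> B (x * y).
Hypothesis BV : forall x, B x -> B x^-1.

Lemma BMl x y : B x -> B (x * y) = B y.
Proof.
move=> bx; apply: propext; split; last exact: BM.
by move=> bxy; rewrite -(mulKg x y); apply: BM => //; apply: BV.
Qed.

Definition Lf (g : G) (z : T) : T := (g * z.1, z.2).
Lemma Lf_can g : cancel (Lf g) (Lf g^-1).
Proof. by case=> z b; rewrite /Lf /= mulKg. Qed.
Lemma Lf_can' g : cancel (Lf g^-1) (Lf g).
Proof. by case=> z b; rewrite /Lf /= mulVKg. Qed.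
Definition Lb g : Bij T := mkbij (Lf_can g) (Lf_can' g).

Definition cf (z : T) : T := (z.1, if pselect (B z.1) then z.2 else ~~ z.2).
Lemma cf_inv : cancel cf cf.
Proof.
case=> z b; rewrite /cf /=; case: (pselect (B z)) => //= _.
by rewrite negbK.
Qed.
Definition cb : Bij T := mkbij cf_inv cf_inv.
Definition L2 g : Bij T := cb * Lb g * cb.

Lemma bfunLb g z : bfun (Lb g) z = Lf g z. Proof. by []. Qed.
Lemma bfuncb z : bfun cb z = cf z. Proof. by []. Qed.
Lemma Lb_hom : ghom Lb.
Proof. by move=> x y; apply: bij_ext => z; rewrite bfunM !bfunLb /Lf /= mulgA. Qed.
Lemma L2_hom : ghom L2.
Proof.
move=> x y; apply: bij_ext => z; rewrite /L2 !bfunM !bfuncb !bfunLb.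
by rewrite cf_inv /Lf /= mulgA.
Qed.
Lemma L2_B x : B x -> L2 x = Lb x.
Proof.
move=> bx; apply: bij_ext => -[z b]; rewrite /L2 !bfunM !bfuncb !bfunLb /Lf /cf /=.
rewrite (BMl z bx).
by case: (pselect (B z)) => //= _; rewrite negbK.
Qed.
Lemma L2_notB g : ~ B g -> L2 g <> Lb g.
Proof.
move=> nb e.
have := congr1 (fun a => (bfun a (1, false)).2) e.
rewrite /L2 !bfunM !bfuncb !bfunLb /Lf /cf /=.
case: (pselect (B 1)) => // _ /=; rewrite mulg1.
by case: (pselect (B g)).
Qed.

Lemma amalgam_gen G1 G2 E : amalgam_splitting G1 G2 E ->
  (forall x, G1 x -> B x) -> (forall x, G2 x -> B x) -> forall g, B g.
Proof.
move=> [_ [_ [_ [_ [_ [_ U]]]]]] h1 h2 g.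
have [f [_ _ _ uq]] := U _ Lb Lb (fun x y _ _ => Lb_hom x y) (fun x y _ _ => Lb_hom x y)
   (fun x _ => erefl).
case: (pselect (B g)) => // nb; exfalso; apply: (L2_notB nb).
rewrite (uq _ L2_hom) ?(uq _ Lb_hom) //.
- by move=> x /h1; apply: L2_B.
- by move=> x /h2; apply: L2_B.
Qed.

Lemma hnn_gen G' E E1 t : hnn_splitting G' E E1 t ->
  (forall x, G' x -> B x) -> B t -> forall g, B g.
Proof.
move=> [_ [_ [_ [_ [_ [_ [_ [_ U]]]]]]]] h1 ht g.
have hc : forall x, E x -> Lb t * Lb x * (Lb t)^-1 = Lb (t * x * t^-1).
  move=> x _; apply: bij_ext => z.
  rewrite !bfunM bfunV !bfunLb.
  have -> : (sval (Lb t)).2 z = Lf t^-1 z by [].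
  by rewrite /Lf /= !mulgA.
have hg : ghom_on G' Lb by move=> x y _ _; apply: Lb_hom.
have := U (Bij T) Lb (Lb t) hg hc.
move=> [F [_ _ _ uq]].
case: (pselect (B g)) => // nb; exfalso; apply: (L2_notB nb).
have e1 := uq _ L2_hom (fun x hx => L2_B (h1 x hx)) (L2_B ht).
have e2 := uq _ Lb_hom (fun x hx => erefl) erefl.
by rewrite e1 e2.
Qed.
End Gen.

Section Main.
Variables (R : realType) (G : groupType).
Local Notation C := (R[i]).
Local Notation Rp := (Rep G C).
Local Notation rf := (regfun G C).
Implicit Types (rho sigma : Rp) (A B V W : Rp -> Prop).

Lemma rep_ext (s r : Rp) : (forall g, proj1_sig s g = proj1_sig r g) -> s = r.
Proof.
case: s r => [f hf] [g hg] /= h.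
have e : f = g by apply: funext.
subst; f_equal; apply: Prop_irrelevance.
Qed.

Lemma zclosedU A B : zclosed A -> zclosed B -> zclosed (fun r => A r \/ B r).
Proof.
move=> [SA hA] [SB hB].
exists (fun h => exists f g, [/\ SA f, SB g & h = @RMul G C f g]) => r; split.
- move=> [/hA a|/hB b] h [f [g [sf sg ->]]] /=; first by rewrite (a f sf) mul0r.
  by rewrite (b g sg) mulr0.
- move=> H; case: (pselect (A r)) => ar; [by left | right].
  apply/hB => g sg.
  have [f [sf nf]] : exists f, SA f /\ reg_eval f r != 0.
    apply: contrapT => nex; apply: ar; apply/hA => f sf.
    by apply: contrapT => nz; apply: nex; exists f; split => //; apply/eqP.
  have := H (@RMul G C f g) (ex_intro _ f (ex_intro _ g (And3 sf sg erefl))).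
  by move=> /= /eqP; rewrite mulf_eq0 (negbTE nf) /= => /eqP.
Qed.

Inductive pexp :=
  | PR of rf
  | PU
  | PAdd of pexp & pexp
  | PMul of pexp & pexp.

Fixpoint peval (p : pexp) (rho : Rp) (u : C) : C :=
  match p with
  | PR f => reg_eval f rho
  | PU => u
  | PAdd p1 p2 => peval p1 rho u + peval p2 rho u
  | PMul p1 p2 => peval p1 rho u * peval p2 rho u
  end.

Lemma pexp_fix_u p u : exists h : rf, forall rho, reg_eval h rho = peval p rho u.
Proof.
elim: p => [f||p1 [h1 e1] p2 [h2 e2]|p1 [h1 e1] p2 [h2 e2]].
- by exists f.
- by exists (@RConst G C u).
- by exists (@RAdd G C h1 h2) => rho /=; rewrite e1 e2.
- by exists (@RMul G C h1 h2) => rho /=; rewrite e1 e2.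
Qed.

Lemma pexp_poly p rho : exists q : {poly C}, forall u, q.[u] = peval p rho u.
Proof.
elim: p => [f||p1 [q1 e1] p2 [q2 e2]|p1 [q1 e1] p2 [q2 e2]].
- by exists (reg_eval f rho)%:P => u; rewrite hornerC.
- by exists 'X => u; rewrite hornerX.
- by exists (q1 + q2) => u /=; rewrite hornerD e1 e2.
- by exists (q1 * q2) => u /=; rewrite hornerM e1 e2.
Qed.

Lemma nonroot (q : {poly C}) : q != 0 -> exists u, q.[u] != 0.
Proof.
move=> nq; apply: contrapT => nex.
have hall : forall u, q.[u] = 0.
  by move=> u; apply: contrapT => nz; apply: nex; exists u; apply/eqP.
suff : false by [].
rewrite -(ltnn (size q)) -{1}(size_iota 0 (size q)) -(size_map (fun n => n%:R : C)).
apply: (max_poly_roots nq).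
- by apply/allP => x _; rewrite /root hall.
- rewrite map_inj_uniq ?iota_uniq // => m n /eqP; rewrite eqr_nat => /eqP.
  done.
Qed.


Section Core.
Variable e : G.
Definition Tv rho : C := proj1_sig rho e 0 0 + proj1_sig rho e 1 1.
Definition Dv rho (u : C) : C := 1 + Tv rho * u + u * u.
Definition Tfun : rf := @RAdd G C (@RCoord G C e 0 0) (@RCoord G C e 1 1).
Definition Dexp : pexp := PAdd (PAdd (PR (@RConst G C 1)) (PMul (PR Tfun) PU)) (PMul PU PU).
Lemma DexpE rho u : peval Dexp rho u = Dv rho u. Proof. by []. Qed.

Lemma Ztr_closed : zclosed (fun rho => Tv rho = -2).
Proof.
exists (fun h => h = @RAdd G C Tfun (@RConst G C 2)) => rho; split.
- by move=> h f -> /=; rewrite -/(Tv rho) h addNr.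
- move=> /(_ _ erefl) /= /eqP; rewrite -/(Tv rho) addr_eq0 => /eqP //.
Qed.

Variable rel : Rp -> C -> Rp -> Prop.
Variable V : Rp -> Prop.
Hypothesis Hex : forall rho u, Dv rho u != 0 -> exists sigma, rel rho u sigma.
Definition pspec (f : rf) (p : pexp) (N : nat) :=
  forall rho u sigma, Dv rho u != 0 -> rel rho u sigma ->
    reg_eval f sigma * Dv rho u ^+ N = peval p rho u.
Hypothesis Hpoly : forall f, exists p N, pspec f p N.

Definition Ipred sigma := exists rho u,
  [/\ V rho, Tv rho != -2, Dv rho u != 0 & rel rho u sigma].

Section Key.
Variables (A B : Rp -> Prop) (SA : rf -> Prop).
Hypothesis hA : forall r, A r <-> (forall f, SA f -> reg_eval f r = 0).
Definition S'A (h : rf) := exists f u p N,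
  [/\ SA f, pspec f p N & forall rho, reg_eval h rho = Dv rho u * peval p rho u].
Definition ZA rho := forall h, S'A h -> reg_eval h rho = 0.
Lemma ZA_closed : zclosed ZA. Proof. by exists S'A. Qed.
Lemma claim1 rho u sigma : ZA rho -> Dv rho u != 0 -> rel rho u sigma -> A sigma.
Proof.
move=> za nd hr; apply/hA => f sf.
have [p [N sp]] := Hpoly f.
have [h hh] := pexp_fix_u (PMul Dexp p) u.
have sh : S'A h by exists f, u, p, N; split.
have := za h sh; rewrite hh.
have -> : peval (PMul Dexp p) rho u = Dv rho u * peval p rho u by [].
rewrite -(sp _ _ _ nd hr) => /eqP.
by rewrite !mulf_eq0 expf_eq0 (negbTE nd) andbF /= orbF => /eqP.
Qed.
Lemma notZA rho : ~ ZA rho -> exists f u p N,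
  [/\ SA f, pspec f p N & Dv rho u * peval p rho u != 0].
Proof.
move=> nz; apply: contrapT => nex; apply: nz => h [f [u [p [N [sf sp hh]]]]].
apply: contrapT => hn; apply: nex; exists f, u, p, N; split => //.
by rewrite -hh; apply/eqP.
Qed.
End Key.

Lemma claim2 A B SA SB
  (hA : forall r, A r <-> (forall f, SA f -> reg_eval f r = 0))
  (hB : forall r, B r <-> (forall f, SB f -> reg_eval f r = 0)) rho :
  (forall u sigma, Dv rho u != 0 -> rel rho u sigma -> A sigma \/ B sigma) ->
  ZA SA rho \/ ZA SB rho.
Proof.
move=> cov; case: (pselect (ZA SA rho)) => za; [by left|].
case: (pselect (ZA SB rho)) => zb; [by right|]; exfalso.
have [f1 [u1 [p1 [N1 [sf1 sp1 n1]]]]] := notZA za.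
have [f2 [u2 [p2 [N2 [sf2 sp2 n2]]]]] := notZA zb.
have [q1 e1] := pexp_poly (PMul Dexp p1) rho.
have [q2 e2] := pexp_poly (PMul Dexp p2) rho.
have e1' : forall u, q1.[u] = Dv rho u * peval p1 rho u := e1.
have e2' : forall u, q2.[u] = Dv rho u * peval p2 rho u := e2.
have nq1 : q1 != 0 by apply/eqP => q0; move: n1; rewrite -e1' q0 horner0 eqxx.
have nq2 : q2 != 0 by apply/eqP => q0; move: n2; rewrite -e2' q0 horner0 eqxx.
have [u hu] := nonroot (mulf_neq0 nq1 nq2).
rewrite hornerM mulf_eq0 negb_or e1' e2' in hu; case/andP: hu => hu1 hu2.
have nd : Dv rho u != 0 by move: hu1; rewrite mulf_eq0 negb_or => /andP [].
have [sigma hr] := Hex nd.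
case: (cov u sigma nd hr) => [/hA a | /hB b].
- have := sp1 _ _ _ nd hr; rewrite (a f1 sf1) mul0r => h0.
  by move: hu1; rewrite -h0 mulr0 eqxx.
- have := sp2 _ _ _ nd hr; rewrite (b f2 sf2) mul0r => h0.
  by move: hu2; rewrite -h0 mulr0 eqxx.
Qed.

Lemma core_thm : irr_component V -> (exists2 rho, V rho & Tv rho != -2) ->
  (forall rho, rel rho 0 rho) ->
  forall rho sigma, V rho -> Tv rho != -2 -> rel rho 1 sigma -> V sigma.
Proof.
move=> [[_ Virr] Vmax] [r0 Vr0 Tr0] H0 rho sigma Vr Tr hr.
have D0 : forall r, Dv r 0 = 1 by move=> r; rewrite /Dv !mulr0 !addr0.
have IV : forall r, V r -> Tv r != -2 -> Ipred r.
  by move=> r vr tr; exists r, 0; split => //; rewrite D0 oner_neq0.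
have fin : forall A, zclosed A -> (forall s, Ipred s -> A s) ->
    forall s, Ipred s \/ V s -> A s.
  move=> A cA IA.
  have hV : forall r, V r -> A r \/ Tv r = -2.
    move=> r vr; case: (pselect (Tv r = -2)) => t2; [by right|left].
    by apply: IA; apply: IV => //; apply/eqP.
  case: (Virr _ _ cA Ztr_closed hV) => [VA|VT]; last by move: Tr0; rewrite VT ?eqxx.
  by move=> s [/IA|/VA].
have Wirr : irreducible (fun s => Ipred s \/ V s).
  split; first by exists r0; right.
  move=> A B cA cB cov.
  case: (cA) => SA hA; case: (cB) => SB hB.
  have cov' : forall s, Ipred s -> A s \/ B s by move=> s hs; apply: cov; left.
  have hZ : forall r, V r -> (ZA SA r \/ ZA SB r) \/ Tv r = -2.
    move=> r vr; case: (pselect (Tv r = -2)) => t2; [by right|left].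
    apply: (claim2 hA hB) => u s nd hrel; apply: cov'; exists r, u; split => //.
    by apply/eqP.
  case: (Virr _ _ (zclosedU (ZA_closed SA) (ZA_closed SB)) Ztr_closed hZ) => [hV|hV];
    last by move: Tr0; rewrite hV ?eqxx.
  case: (Virr _ _ (ZA_closed SA) (ZA_closed SB) hV) => hV'; [left|right];
    apply: fin => // s [r [u [vr _ nd hrel]]].
  - exact: (claim1 hA (hV' r vr) nd hrel).
  - exact: (claim1 hB (hV' r vr) nd hrel).
apply: (Vmax _ Wirr (fun r h => or_intror h)); left; exists rho, 1; split => //.
have -> : Dv rho 1 = Tv rho - (-2) by rewrite /Dv; ring.
by rewrite subr_eq0.
Qed.

End Core.

End Main.

Local Open Scope ring_scope.

Section Main2.
Variables (R : realType) (G : groupType).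
Local Notation C := (R[i]).
Local Notation Rp := (Rep G C).
Local Notation rf := (regfun G C).
Local Notation pexp := (pexp R G).
Implicit Types (rho sigma : Rp) (A B V W : Rp -> Prop).

Lemma rep1 (s : Rp) : proj1_sig s 1%g = 1%:M.
Proof.
case: s => f [hm hd] /=.
have e : f 1%g = f 1%g *m f 1%g by rewrite -hm mulg1.
have := congr1 (mulmx (adj2 (f 1%g))) e.
by rewrite mulmxA adj2_mx hd mul1mx => h; exact: esym.
Qed.

Lemma repV (s : Rp) g : proj1_sig s (g^-1)%g = adj2 (proj1_sig s g).
Proof.
have e : proj1_sig s (g^-1)%g *m proj1_sig s g = 1%:M.
  by rewrite -(proj1 (proj2_sig s)) mulVg rep1.
by rewrite -[LHS]mulmx1 -(proj2 (proj2_sig s) g) -mx_adj2 mulmxA e mul1mx. 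
Qed.

Definition rfsubst (phi : G -> G) :=
  fix sub (f : rf) : rf :=
  match f with
  | RConst c => @RConst G C c
  | RCoord g i j => @RCoord G C (phi g) i j
  | RAdd f1 f2 => @RAdd G C (sub f1) (sub f2)
  | RMul f1 f2 => @RMul G C (sub f1) (sub f2)
  end.

Section Comp.
Variables (phi : G -> G) (hphi : ghom phi).
Lemma comp_proof rho : is_SL2_rep (fun g => proj1_sig rho (phi g)).
Proof.
case: rho => f [hm hd] /=; split => [x y|x]; last exact: hd.
by rewrite hphi hm.
Qed.
Definition comprep rho : Rp := exist _ _ (comp_proof rho).
Lemma comprepE rho g : proj1_sig (comprep rho) g = proj1_sig rho (phi g).
Proof. by []. Qed.
Lemma rfsubstE f rho : reg_eval (rfsubst phi f) rho = reg_eval f (comprep rho).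
Proof. by elim: f => //= f1 -> f2 ->. Qed.
Lemma pull_closed A : zclosed A -> zclosed (fun r => A (comprep r)).
Proof.
move=> [S hS]; exists (fun h => exists2 f, S f & h = rfsubst phi f) => r; split.
- by move=> /hS a h [f sf ->]; rewrite rfsubstE a.
- by move=> H; apply/hS => f sf; rewrite -rfsubstE; apply: H; exists f.
Qed.
End Comp.

Lemma component_closed V : irr_component V -> zclosed V.
Proof.
move=> [[ne Virr] Vmax].
pose S := fun f : rf => forall r, V r -> reg_eval f r = 0.
suff hcl : forall r, (forall f, S f -> reg_eval f r = 0) -> V r.
  by exists S => r; split => [vr f sf|]; [exact: sf|exact: hcl].
apply: (Vmax (fun r => forall f, S f -> reg_eval f r = 0)).
- split; first by case: ne => r vr; exists r => f sf; exact: sf.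
  move=> A B [SA hA] [SB hB] cov.
  have VAB : forall r, V r -> A r \/ B r.
    by move=> r vr; apply: cov => f sf; exact: sf.
  case: (Virr _ _ (ex_intro _ SA hA) (ex_intro _ SB hB) VAB) => h; [left|right].
  + by move=> r hr; apply/hA => f sf; apply: hr => s vs; have /hA := h s vs; apply.
  + by move=> r hr; apply/hB => f sf; apply: hr => s vs; have /hB := h s vs; apply.
- by move=> r vr f sf; exact: sf.
Qed.


Lemma stable_of V (tau psi : G -> G) (ht : ghom tau) (hp : ghom psi)
  (tp : forall x, tau (psi x) = x) (pt : forall x, psi (tau x) = x) (e : G) :
  irr_component V -> (exists2 rho, V rho & Tv e rho != -2) ->
  (forall rho, V rho -> Tv e rho != -2 -> V (comprep ht rho)) ->
  precomp_stable tau V.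
Proof.
move=> Vc [r0 vr0 tr0] H.
have [[_ Virr] Vmax] := Vc.
have hall : forall rho, V rho -> V (comprep ht rho).
  have cZ := pull_closed ht (component_closed Vc).
  have hV : forall r, V r -> V (comprep ht r) \/ Tv e r = -2.
    move=> r v; case: (pselect (Tv e r = -2)) => t2; [by right|left].
    by apply: H => //; apply/eqP.
  case: (Virr _ _ cZ (@Ztr_closed R G e) hV) => [h|h]; first exact: h.
  by move: tr0; rewrite h ?eqxx.
have ctp : forall s, comprep ht (comprep hp s) = s.
  by move=> s; apply: rep_ext => g; rewrite !comprepE pt.
have cpt : forall s, comprep hp (comprep ht s) = s.
  by move=> s; apply: rep_ext => g; rewrite !comprepE tp.
have back : forall s, V (comprep ht s) -> V s.
  apply: (Vmax (fun s => V (comprep ht s))); last exact: hall.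
  split; first by exists (comprep hp r0); rewrite ctp.
  move=> A B cA cB cov.
  have hV : forall r, V r -> A (comprep hp r) \/ B (comprep hp r).
    by move=> r vr; apply: cov; rewrite ctp.
  case: (Virr _ _ (pull_closed hp cA) (pull_closed hp cB) hV) => h; [left|right] => s vs;
    by rewrite -(cpt s); apply: h.
move=> s; split.
- move=> vs; exists (comprep hp s); first by apply: back; rewrite ctp.
  by move=> g; rewrite comprepE pt.
- case=> rho vr hs; have -> : s = comprep ht rho by apply: rep_ext.
  exact: hall.
Qed.

Definition evm (P : 'I_2 -> 'I_2 -> pexp) rho u : 'M[C]_2 :=
  \matrix_(i, j) peval (P i j) rho u.
Definition pmul (P Q : 'I_2 -> 'I_2 -> pexp) i j :=
  PAdd (PMul (P i 0) (Q 0 j)) (PMul (P i 1) (Q 1 j)).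
Lemma evm_mul P Q rho u : evm (pmul P Q) rho u = evm P rho u *m evm Q rho u.
Proof. by apply/matrixP => i j; rewrite mul2E !mxE. Qed.
Definition padj (P : 'I_2 -> 'I_2 -> pexp) i j :=
  PAdd (PMul (PR (@RConst G C (i == j)%:R)) (PAdd (P 0 0) (P 1 1)))
       (PMul (PR (@RConst G C (-1))) (P i j)).
Lemma evm_adj P rho u : evm (padj P) rho u = adj2 (evm P rho u).
Proof.
apply/matrixP => i j; rewrite /adj2 !mxE tr2 !mxE /=.
by rewrite mulr_natl mulN1r.
Qed.
Definition cmx (g : G) (i j : 'I_2) : pexp := PR (@RCoord G C g i j).
Lemma evm_c g rho u : evm (cmx g) rho u = proj1_sig rho g.
Proof. by apply/matrixP => i j; rewrite !mxE. Qed.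

Section Good.
Variables (e : G) (rel : Rp -> C -> Rp -> Prop).
Definition goodg (g : G) := exists N P, forall rho u sigma,
  Dv e rho u != 0 -> rel rho u sigma ->
  Dv e rho u ^+ N *: proj1_sig sigma g = evm P rho u.

Lemma good_mul g h : goodg g -> goodg h -> goodg (g * h)%g.
Proof.
move=> [N1 [P1 h1]] [N2 [P2 h2]]; exists (N1 + N2)%N, (pmul P1 P2).
move=> rho u sigma nd hr; rewrite evm_mul -(h1 _ _ _ nd hr) -(h2 _ _ _ nd hr).
by rewrite (proj1 (proj2_sig sigma)) -scalemxAl -scalemxAr scalerA exprD.
Qed.

Lemma good_inv g : goodg g -> goodg (g^-1)%g.
Proof.
move=> [N [P h]]; exists N, (padj P) => rho u sigma nd hr.
by rewrite evm_adj -(h _ _ _ nd hr) repV adj2Z.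
Qed.

Fixpoint Dpow (n : nat) : pexp :=
  if n is n'.+1 then PMul (@Dexp R G e) (Dpow n') else PR (@RConst G C 1).
Lemma DpowE n rho u : peval (Dpow n) rho u = Dv e rho u ^+ n.
Proof. by elim: n => [|n IH] //=; rewrite IH exprS. Qed.

Lemma good_poly : (forall g, goodg g) -> forall f, exists p N, pspec e rel f p N.
Proof.
move=> hg; elim=> [c|g i j|f1 [p1 [N1 h1]] f2 [p2 [N2 h2]]|f1 [p1 [N1 h1]] f2 [p2 [N2 h2]]].
- by exists (PR (@RConst G C c)), 0%N => rho u sigma _ _; rewrite expr0 mulr1.
- have [N [P hP]] := hg g; exists (P i j), N => rho u sigma nd hr.
  have := congr1 (fun M : 'M[C]_2 => M i j) (hP _ _ _ nd hr).
  by rewrite /= !mxE mulrC.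
- exists (PAdd (PMul p1 (Dpow N2)) (PMul p2 (Dpow N1))), (N1 + N2)%N.
  move=> rho u sigma nd hr /=; rewrite !DpowE -(h1 _ _ _ nd hr) -(h2 _ _ _ nd hr).
  by rewrite exprD; ring.
- exists (PMul p1 p2), (N1 + N2)%N.
  move=> rho u sigma nd hr /=; rewrite -(h1 _ _ _ nd hr) -(h2 _ _ _ nd hr).
  by rewrite exprD; ring.
Qed.
End Good.

End Main2.

Local Open Scope ring_scope.

Section Spec.
Variables (R : realType) (G : groupType) (e : G).
Local Notation C := (R[i]).
Local Notation Rp := (Rep G C).
Local Notation pexp := (pexp R G).
Implicit Types (rho sigma : Rp).

Definition Am rho := proj1_sig rho e.
Definition Kmat rho (u : C) : 'M[C]_2 :=
  (1 - u * u) *: 1%:M + (u * (2 + Tv e rho * u)) *: Am rho.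
Definition Mu rho u := (Dv e rho u)^-1 *: Kmat rho u.

Lemma detK rho u : \det (Kmat rho u) = Dv e rho u ^+ 2.
Proof.
have dA := proj2 (proj2_sig rho) e; rewrite det2 in dA.
rewrite det2 !mxE /Dv /Tv /Am /=.
set a := proj1_sig rho e 0 0 in dA *; set b := proj1_sig rho e 0 1 in dA *.
set c := proj1_sig rho e 1 0 in dA *; set d := proj1_sig rho e 1 1 in dA *.
apply/eqP; rewrite -subr_eq0; apply/eqP.
transitivity ((u * (2 + (a + d) * u)) ^+ 2 * (a * d - b * c - 1)); first by ring.
by rewrite dA subrr mulr0.
Qed.

Lemma detMu rho u : Dv e rho u != 0 -> \det (Mu rho u) = 1.
Proof.
move=> nd; rewrite /Mu detZ detK exprVn mulVf //.
by rewrite expf_neq0.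
Qed.

Lemma DMu rho u : Dv e rho u != 0 -> Dv e rho u *: Mu rho u = Kmat rho u.
Proof. by move=> nd; rewrite /Mu scalerA mulfV // scale1r. Qed.

Lemma Kcomm rho (x : G) : (e * x = x * e)%g ->
  forall u, Kmat rho u *m proj1_sig rho x = proj1_sig rho x *m Kmat rho u.
Proof.
move=> ex u; have hm := proj1 (proj2_sig rho).
rewrite /Kmat mulmxDl mulmxDr -!scalemxAl -!scalemxAr mul1mx mulmx1 /Am.
by rewrite -!hm ex.
Qed.

Lemma Mucomm rho (x : G) : (e * x = x * e)%g ->
  forall u, Mu rho u *m proj1_sig rho x = proj1_sig rho x *m Mu rho u.
Proof. by move=> ex u; rewrite /Mu -scalemxAl -scalemxAr Kcomm. Qed.

Lemma Mu_adj rho u : Dv e rho u != 0 -> Mu rho u *m adj2 (Mu rho u) = 1%:M.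
Proof. by move=> nd; rewrite mx_adj2 detMu. Qed.
Lemma adj_Mu rho u : Dv e rho u != 0 -> adj2 (Mu rho u) *m Mu rho u = 1%:M.
Proof. by move=> nd; rewrite adj2_mx detMu. Qed.

Lemma Mu0 rho : Mu rho 0 = 1%:M.
Proof.
rewrite /Mu /Kmat /Dv !mul0r !mulr0 !addr0 subr0 invr1 !scale1r scale0r addr0.
by [].
Qed.

Lemma Mu1 rho : Tv e rho != -2 -> Mu rho 1 = Am rho.
Proof.
move=> nt.
have hD : Dv e rho 1 = 2 + Tv e rho by rewrite /Dv; ring.
have nD : 2 + Tv e rho != 0.
  by apply: contra nt; rewrite addrC addr_eq0.
rewrite /Mu /Kmat hD !mulr1 !mul1r subrr scale0r add0r scalerA mulVf //.
by rewrite scale1r.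
Qed.

Lemma rep_det1 rho x : \det (proj1_sig rho x) == 1.
Proof. by rewrite (proj2 (proj2_sig rho) x). Qed.
Definition rhoS rho (x : G) : SL2 R := exist (fun M : 'M[R[i]]_2 => \det M == 1) _ (rep_det1 rho x).
Lemma rhoS_hom rho : ghom (rhoS rho).
Proof. by move=> x y; apply: val_inj; rewrite /= (proj1 (proj2_sig rho)). Qed.
Lemma Mu_det1 rho u (nd : Dv e rho u != 0) : \det (Mu rho u) == 1.
Proof. by rewrite detMu. Qed.
Definition MuS rho u nd : SL2 R := exist (fun M : 'M[R[i]]_2 => \det M == 1) _ (@Mu_det1 rho u nd).

Lemma valSM (a b : SL2 R) : val (a * b)%g = val a *m val b. Proof. by []. Qed.
Lemma valSV (a : SL2 R) : val (a^-1)%g = adj2 (val a). Proof. by []. Qed.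

Definition repOf (F : G -> SL2 R) (hF : ghom F) : Rp.
Proof.
refine (exist _ (fun g => val (F g)) _); split.
- by move=> x y; rewrite hF.
- by move=> x; apply/eqP; exact: (valP (F x)).
Defined.
Lemma repOfE F hF g : proj1_sig (@repOf F hF) g = val (F g). Proof. by []. Qed.

End Spec.


Section GroupLemmas.
Local Open Scope group_scope.
Variables (G H : groupType) (f : G -> H) (hf : ghom f).
Lemma ghom1 : f 1 = 1.
Proof. by apply: (mulgI (f 1)); rewrite -hf !mulg1. Qed.
Lemma ghomV x : f x^-1 = (f x)^-1.
Proof. by apply/esym/mulg1_eq; rewrite -hf mulgV ghom1. Qed.
End GroupLemmas.

Local Open Scope ring_scope.

Section Spec2.
Variables (R : realType) (G : groupType) (e : G).
Local Notation C := (R[i]).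
Local Notation Rp := (Rep G C).
Local Notation pexp := (pexp R G).
Local Notation PU := (@PU R G).
Implicit Types (rho sigma : Rp).

Definition omu : pexp := PAdd (PR (@RConst G C 1)) (PMul (PR (@RConst G C (-1))) (PMul PU PU)).
Definition pbeta : pexp := PMul PU (PAdd (PR (@RConst G C 2)) (PMul (PR (Tfun R e)) PU)).
Definition Kp (i j : 'I_2) : pexp :=
  PAdd (PMul (PR (@RConst G C (i == j)%:R)) omu) (PMul pbeta (PR (@RCoord G C e i j))).
Lemma evm_K rho u : evm Kp rho u = Kmat e rho u.
Proof.
apply/matrixP => i j; rewrite !mxE /= /Tv /Am.
by rewrite mulr_natl mulr_natr; ring.
Qed.


Section HNN.
Variables (G' E E1 : G -> Prop) (t : G).
Hypothesis hs : hnn_splitting G' E E1 t.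
Hypothesis hc : in_centralizer G' E e.

Definition relH rho u sigma :=
  (forall x, G' x -> proj1_sig sigma x = proj1_sig rho x) /\
  proj1_sig sigma t = proj1_sig rho t *m Mu e rho u.

Lemma hnn_ex rho u : Dv e rho u != 0 -> exists sigma, relH rho u sigma.
Proof.
move=> nd; have [_ [_ [_ [_ [_ [_ [_ [_ U]]]]]]]] := hs.
have hm := proj1 (proj2_sig rho).
have hcond : forall x, E x -> (rhoS rho t * MuS nd * rhoS rho x * (rhoS rho t * MuS nd)^-1
      = rhoS rho (t * x * t^-1))%g.
  move=> x ex; apply: val_inj; rewrite !valSM valSV valSM /= !hm repV adj2M.
  rewrite -!mulmxA; congr (_ *m _).
  rewrite [Mu e rho u *m (_ *m _)]mulmxA (Mucomm _ (proj2 hc x ex)) -mulmxA.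
  by rewrite [Mu e rho u *m (_ *m _)]mulmxA Mu_adj // mul1mx.
have [F [hF hF' hFt _]] := U (SL2 R) (rhoS rho) _ (fun x y _ _ => rhoS_hom rho x y) hcond.
exists (repOf hF); split => [x gx|]; rewrite repOfE; [by rewrite hF' | by rewrite hFt].
Qed.

Lemma hnn_good g : goodg e relH g.
Proof.
have baseG : forall x, G' x -> goodg e relH x.
  move=> x gx; exists 0%N, (@cmx R G x) => rho u sigma _ [h1 _].
  by rewrite expr0 scale1r evm_c h1.
have G1 : G' 1%g by case: hs => [[]].
apply: (hnn_gen (B := goodg e relH) (baseG _ G1) (@good_mul _ _ _ _) (@good_inv _ _ _ _) hs baseG).
exists 1%N, (pmul (@cmx R G t) Kp) => rho u sigma nd [_ h2].
by rewrite expr1 h2 evm_mul evm_c evm_K -scalemxAr scalerA mulfV // scale1r.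
Qed.

Lemma hnn_rel0 rho : relH rho 0 rho.
Proof. by split => //; rewrite Mu0 mulmx1. Qed.

Variables (tau : G -> G) (ht : ghom tau).
Hypotheses (h1 : forall x, G' x -> tau x = x) (h2 : tau t = (t * e)%g).

Lemma hnn_rel1 rho : Tv e rho != -2 -> relH rho 1 (comprep ht rho).
Proof.
move=> nt; split => [x gx|]; rewrite comprepE; first by rewrite h1.
by rewrite h2 (proj1 (proj2_sig rho)) Mu1.
Qed.

Lemma hnn_inverse : exists psi : G -> G,
  [/\ ghom psi, forall x, tau (psi x) = x & forall x, psi (tau x) = x].
Proof.
have [_ [_ [_ [_ [_ [_ [_ [_ U]]]]]]]] := hs.
have [Ge ce] := hc.
have c1 : forall x, E x -> ((t * e^-1) * id x * (t * e^-1)^-1 = id (t * x * t^-1))%g.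
  move=> x ex /=; rewrite invgM invgK !mulgA; congr (_ * _)%g.
  by rewrite -(mulgA _ x e) -(ce x ex) mulgA mulgVK.
have [psi [hp hpG hpt _]] := U G id (t * e^-1)%g (fun x y _ _ => erefl) c1.
have c2 : forall x, E x -> (t * id x * t^-1 = id (t * x * t^-1))%g by [].
have [F [_ _ _ uq]] := U G id t (fun x y _ _ => erefl) c2.
have idF : forall x, x = F x by apply: uq.
have te : tau e = e by apply: h1.
exists psi; split => // x.
- rewrite [RHS]idF; apply: (uq (fun y => tau (psi y))).
  + by move=> a b; rewrite /= hp ht.
  + by move=> a ga /=; rewrite hpG // h1.
  + by rewrite /= hpt ht h2 (ghomV ht) te mulgK.
- rewrite [RHS]idF; apply: (uq (fun y => psi (tau y))).
  + by move=> a b; rewrite /= ht hp.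
  + by move=> a ga /=; rewrite h1 // hpG.
  + by rewrite /= h2 hp hpt (hpG _ Ge) mulgVK.
Qed.

Lemma hnn_part1 (V : Rp -> Prop) : irr_component V -> (exists2 rho, V rho & Tv e rho != -2) ->
  precomp_stable tau V.
Proof.
move=> Vc wit; have [psi [hp tp pt]] := hnn_inverse.
apply: (stable_of hp tp pt Vc wit) => rho vr tr.
exact: (core_thm hnn_ex (good_poly hnn_good) Vc wit hnn_rel0 vr tr (hnn_rel1 tr)).
Qed.
End HNN.


Lemma adj2_1 : adj2 (1%:M : 'M[C]_2) = 1%:M.
Proof. by apply: mx2P; rewrite !mxE tr2 !mxE /=; ring. Qed.

Section Amalgam.
Variables (G1 G2 E : G -> Prop).
Hypothesis hs : amalgam_splitting G1 G2 E.
Hypothesis hc : in_centralizer G2 E e.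

Definition relA rho u sigma :=
  (forall x, G1 x -> proj1_sig sigma x = proj1_sig rho x) /\
  (forall x, G2 x -> proj1_sig sigma x = Mu e rho u *m proj1_sig rho x *m adj2 (Mu e rho u)).

Lemma amal_ex rho u : Dv e rho u != 0 -> exists sigma, relA rho u sigma.
Proof.
move=> nd; have [_ [_ [_ [_ [_ [_ U]]]]]] := hs.
have hm := proj1 (proj2_sig rho).
have hg2 : ghom_on G2 (fun x => MuS nd * rhoS rho x * (MuS nd)^-1)%g.
  move=> x y _ _; apply: val_inj; rewrite !valSM !valSV /= hm.
  rewrite -!mulmxA; congr (_ *m _); congr (_ *m _).
  by rewrite [adj2 _ *m (_ *m _)]mulmxA adj_Mu // mul1mx.
have hag : forall x, E x -> rhoS rho x = (MuS nd * rhoS rho x * (MuS nd)^-1)%g.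
  move=> x ex; apply: val_inj; rewrite !valSM !valSV /=.
  by rewrite (Mucomm _ (proj2 hc x ex)) -mulmxA Mu_adj // mulmx1.
have [F [hF hF1 hF2 _]] := U (SL2 R) (rhoS rho) _ (fun x y _ _ => rhoS_hom rho x y) hg2 hag.
exists (repOf hF); split => x gx; rewrite repOfE; first by rewrite hF1.
by rewrite hF2.
Qed.

Lemma amal_good g : goodg e relA g.
Proof.
have base1 : forall x, G1 x -> goodg e relA x.
  move=> x gx; exists 0%N, (@cmx R G x) => rho u sigma _ [h1 _].
  by rewrite expr0 scale1r evm_c h1.
have base2 : forall x, G2 x -> goodg e relA x.
  move=> x gx; exists 2%N, (pmul (pmul Kp (@cmx R G x)) (padj Kp)) => rho u sigma nd [_ h2].
  rewrite h2 // !evm_mul evm_c evm_adj evm_K -(DMu nd).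
  move: (Mu e rho u) (Dv e rho u) => M D.
  by rewrite adj2Z expr2 -!scalemxAl -!scalemxAr scalerA.
have G11 : G1 1%g by case: hs => [[]].
exact: (amalgam_gen (B := goodg e relA) (base1 _ G11) (@good_mul _ _ _ _) (@good_inv _ _ _ _) hs base1 base2).
Qed.

Lemma amal_rel0 rho : relA rho 0 rho.
Proof. by split => // x _; rewrite Mu0 adj2_1 mul1mx mulmx1. Qed.

Variables (tau : G -> G) (ht : ghom tau).
Hypotheses (h1 : forall x, G1 x -> tau x = x) (h2 : forall x, G2 x -> tau x = (e * x * e^-1)%g).

Lemma amal_rel1 rho : Tv e rho != -2 -> relA rho 1 (comprep ht rho).
Proof.
move=> nt; split => x gx; rewrite comprepE; first by rewrite h1.
by rewrite h2 // !(proj1 (proj2_sig rho)) repV Mu1.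
Qed.

Lemma amal_inverse : exists psi : G -> G,
  [/\ ghom psi, forall x, tau (psi x) = x & forall x, psi (tau x) = x].
Proof.
have [_ [_ [_ [_ [_ [_ U]]]]]] := hs.
have [Ge ce] := hc.
have hc2 : ghom_on G2 (fun x => e^-1 * x * e)%g.
  by move=> x y _ _; rewrite !mulgA mulgK.
have hag : forall x, E x -> id x = (e^-1 * x * e)%g.
  by move=> x ex; rewrite -mulgA -(ce x ex) mulgA mulVg mul1g.
have [psi [hp hp1 hp2 _]] := U G id _ (fun x y _ _ => erefl) hc2 hag.
have [F [_ _ _ uq]] := U G id id (fun x y _ _ => erefl) (fun x y _ _ => erefl) (fun x _ => erefl).
have idF : forall x, x = F x by apply: uq.
have te : tau e = e by rewrite h2 // mulgK.
have pe : psi e = e by rewrite hp2 // mulVg mul1g.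
exists psi; split => // x.
- rewrite [RHS]idF; apply: (uq (fun y => tau (psi y))).
  + by move=> a b; rewrite /= hp ht.
  + by move=> a ga /=; rewrite hp1 // h1.
  + move=> a ga /=; rewrite hp2 // !ht (ghomV ht) te h2 //.
    by rewrite !mulgA mulVg mul1g mulgVK.
- rewrite [RHS]idF; apply: (uq (fun y => psi (tau y))).
  + by move=> a b; rewrite /= ht hp.
  + by move=> a ga /=; rewrite h1 // hp1.
  + move=> a ga /=; rewrite h2 // !hp (ghomV hp) pe hp2 //.
    by rewrite !mulgA mulgV mul1g mulgK.
Qed.

Lemma amal_part1 (V : Rp -> Prop) : irr_component V -> (exists2 rho, V rho & Tv e rho != -2) ->
  precomp_stable tau V.
Proof.
move=> Vc wit; have [psi [hp tp pt]] := amal_inverse.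
apply: (stable_of hp tp pt Vc wit) => rho vr tr.
exact: (core_thm amal_ex (good_poly amal_good) Vc wit amal_rel0 vr tr (amal_rel1 tr)).
Qed.
End Amalgam.

End Spec2.

Local Open Scope ring_scope.

Section Final.
Variables (R : realType) (G : groupType).
Local Notation C := (R[i]).
Local Notation Rp := (Rep G C).
Variable V : Rp -> Prop.

Lemma elem_hom e (tau : G -> G) : elementary_aut e tau -> ghom tau.
Proof. by case=> [[G1 [G2 [E [_ _ ht _ _]]]]|[G' [E [E1 [t [_ _ ht _ _]]]]]]. Qed.

Lemma mod_hom (phi : G -> G) : in_Mod phi -> ghom phi.
Proof.
elim=> {phi} [|e tau /elem_hom //|f g _ hf _ hg|f g _ hf cfg cgf|f g _ hf ext].
- by [].
- by move=> x y /=; rewrite hg hf.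
- move=> x y; rewrite -{1}(cgf x) -{1}(cgf y) -hf; exact: cfg.
- by move=> x y; rewrite -!ext hf.
Qed.

Lemma stable_id : precomp_stable id V.
Proof.
move=> s; split; first by move=> vs; exists s.
by case=> r vr hs; have -> : s = r by apply: rep_ext.
Qed.

Lemma stable_comp f g (hf : ghom f) (hg : ghom g) :
  precomp_stable f V -> precomp_stable g V -> precomp_stable (f \o g) V.
Proof.
move=> sf sg s; split.
- move=> /sg [r1 v1 e1]; have [r2 v2 e2] := (sf r1).1 v1.
  by exists r2 => // x; rewrite e1 e2.
- case=> r vr hs.
  have v1 : V (comprep hf r) by apply/sf; exists r.
  by apply/sg; exists (comprep hf r).
Qed.

Lemma stable_inv f g (hf : ghom f) : cancel f g -> cancel g f ->
  precomp_stable f V -> precomp_stable g V.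
Proof.
move=> cfg cgf sf s; split.
- move=> vs; exists (comprep hf s); first by apply/sf; exists s.
  by move=> x; rewrite comprepE cgf.
- case=> r vr hs; have [r2 v2 e2] := (sf r).1 vr.
  have -> : s = r2 by apply: rep_ext => x; rewrite hs e2 cgf.
  exact: v2.
Qed.

Lemma stable_ext f g : (forall x, f x = g x) -> precomp_stable f V -> precomp_stable g V.
Proof. by move=> ext; have -> : f = g by apply: funext. Qed.

End Final.

Theorem theorem4p3 (R : realType) (G : groupType) :
  finitely_generated G ->
  (forall (e : G) (tau : G -> G), elementary_aut e tau ->
     forall V : Rep G R[i] -> Prop, irr_component V ->
       (exists2 rho : Rep G R[i], V rho & (\tr (proj1_sig rho e) != -2)%R) ->
       precomp_stable tau V)
  /\
  (forall phi : G -> G, in_Mod phi ->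
     forall V : Rep G R[i] -> Prop, irr_component V ->
       (forall g : G, exists2 rho : Rep G R[i], V rho &
                        (\tr (proj1_sig rho g) != -2)%R) ->
       precomp_stable phi V).
Proof.
move=> _.
have part1 : forall (e : G) (tau : G -> G), elementary_aut e tau ->
     forall V : Rep G R[i] -> Prop, irr_component V ->
       (exists2 rho : Rep G R[i], V rho & (\tr (proj1_sig rho e) != -2)%R) ->
       precomp_stable tau V.
  move=> e tau hel V Vc [rho vr tr].
  have wit : exists2 rho, V rho & Tv e rho != -2 by exists rho; rewrite // /Tv -tr2.
  case: hel => [[G1 [G2 [E [hs hc ht h1 h2]]]]|[G' [E [E1 [t [hs hc ht h1 h2]]]]]].
  - exact: (amal_part1 hs hc ht h1 h2 Vc wit).
  - exact: (hnn_part1 hs hc ht h1 h2 Vc wit).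
split => //.
move=> phi hM V Vc hall.
elim: hM => {phi} [|e tau hel|f g hf sf hg sg|f g hf sf cfg cgf|f g hf sf ext].
- exact: stable_id.
- exact: (part1 e tau hel V Vc (hall e)).
- exact: (stable_comp (mod_hom hf) (mod_hom hg) sf sg).
- exact: (stable_inv (mod_hom hf) cfg cgf sf).
- exact: (stable_ext ext sf).
Qed.
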